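(* Let $G$ be a concurrent game structure, $T\subseteq S$, with all states of $T\cup W_2$ absorbing. Let $v$ be a valuation such that $\mathrm{Pre}_1(v)\ge v$ and $v(s)=0$ for all $s\in W_2$. Let $\xi_1$ be a player-1 selector with $\mathrm{Pre}_{1:\xi_1}(v)=\mathrm{Pre}_1(v)$. If $\xi_1$ is proper, then for all player-2 strategies $\pi_2$ we have $\Pr^{\overline{\xi}_1,\pi_2}(\mathrm{Reach}(T))\ge v$, i.e. $\Pr_s^{\overline{\xi}_1,\pi_2}(\mathrm{Reach}(T))\ge v(s)$ for all $s\in S$.
   Context: Concurrent game structure $G=(S,M,\Gamma_1,\Gamma_2,\delta)$: finite states, finite moves, nonempty move sets $\Gamma_i(s)$, transition probabilities $\delta(s,a_1,a_2)\in\mathrm{Distr}(S)$ (simultaneous independent moves). Absorbing state: every move pair leads back to it with probability 1. Selectors assign to each state a distribution on available moves; $\overline{\xi}$ is the memoryless strategy playing $\xi$. $\Pr_s^{\pi_1,\pi_2}$: induced measure on plays from $s$. $\mathrm{Reach}(X)$: plays visiting $X$. $W_2=\{s:\sup_{\pi_1}\inf_{\pi_2}\Pr_s^{\pi_1,\pi_2}(\mathrm{Reach}(T))=0\}$. A valuation is $v:S\to[0,1]$, compared pointwise. $\mathrm{Pre}_{\xi_1,\xi_2}(v)(s)=\sum_{a,b}\sum_tv(t)\delta(s,a,b)(t)\xi_1(s)(a)\xi_2(s)(b)$, $\mathrm{Pre}_{1:\xi_1}(v)(s)=\inf_{\xi_2}\mathrm{Pre}_{\xi_1,\xi_2}(v)(s)$,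 $\mathrm{Pre}_1(v)(s)=\sup_{\xi_1}\mathrm{Pre}_{1:\xi_1}(v)(s)$. A player-1 strategy $\pi_1$ is proper if for every player-2 strategy $\pi_2$ and all $s\in S\setminus(T\cup W_2)$, $\Pr_s^{\pi_1,\pi_2}(\mathrm{Reach}(T\cup W_2))=1$; a selector is proper if its memoryless strategy is. *)

(* Defs.v *)
From HB Require Import structures.
From mathcomp Require Import all_boot all_order all_algebra.
From mathcomp Require Import boolp classical_sets reals.
Set Implicit Arguments. Unset Strict Implicit. Unset Printing Implicit Defensive.
Import Order.TTheory GRing.Theory Num.Theory.
Local Open Scope ring_scope.

Section ConcurrentGames.
Variables (R : realType) (S M : finType).

Definition is_distr (A : {set M}) (d : M -> R) : Prop :=
  [/\ forall a, 0 <= d a, \sum_a d a = 1 & forall a, a \notin A -> d a = 0].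

Record cgs := CGS {
  mov1 : S -> {set M};
  mov2 : S -> {set M};
  trans : S -> M -> M -> S -> R;
  mov1_nonempty : forall s, mov1 s != finset.set0;
  mov2_nonempty : forall s, mov2 s != finset.set0;
  trans_ge0 : forall s a b t, 0 <= trans s a b t;
  trans_sum1 : forall s a b, \sum_t trans s a b t = 1 }.

Variable G : cgs.

(* history-dependent randomized strategies: (past states, current state) -> distr *)
Definition strategy := seq S -> S -> M -> R.
Definition is_strategy1 (pi : strategy) := forall h s, is_distr (mov1 G s) (pi h s).
Definition is_strategy2 (pi : strategy) := forall h s, is_distr (mov2 G s) (pi h s).

Definition selector := S -> M -> R.
Definition is_selector1 (xi : selector) := forall s, is_distr (mov1 G s) (xi s).
Definition is_selector2 (xi : selector) := forall s, is_distr (mov2 G s) (xi s).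
Definition memoryless (xi : selector) : strategy := fun _ s => xi s.

Fixpoint reach_within (pi1 pi2 : strategy) (X : {set S}) (n : nat)
    (h : seq S) (s : S) : R :=
  if s \in X then 1 else
  match n with
  | 0 => 0
  | n'.+1 => \sum_a \sum_b \sum_t
       pi1 h s a * pi2 h s b * trans G s a b t *
       reach_within pi1 pi2 X n' (rcons h s) t
  end.

(* Pr_s^{pi1,pi2}(Reach X) = sup_n Pr(visit X within n steps)
   (continuity of the induced measure from below) *)
Definition prob_reach (pi1 pi2 : strategy) (X : {set S}) (s : S) : R :=
  sup [set r | exists n, r = reach_within pi1 pi2 X n [::] s].

Definition W2 (T : {set S}) : {set S} :=
  [set s | `[< sup [set r | exists pi1, is_strategy1 pi1 /\
                 r = inf [set q | exists pi2, is_strategy2 pi2 /\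
                          q = prob_reach pi1 pi2 T s]] = 0 >]].

Definition absorbing (s : S) : Prop :=
  forall a b, a \in mov1 G s -> b \in mov2 G s -> trans G s a b s = 1.

Definition valuation (v : S -> R) : Prop := forall s, 0 <= v s <= 1.

Definition Pre12 (xi1 xi2 : selector) (v : S -> R) (s : S) : R :=
  \sum_a \sum_b \sum_t v t * trans G s a b t * xi1 s a * xi2 s b.

Definition Pre1sel (xi1 : selector) (v : S -> R) (s : S) : R :=
  inf [set r | exists xi2, is_selector2 xi2 /\ r = Pre12 xi1 xi2 v s].

Definition Pre1 (v : S -> R) (s : S) : R :=
  sup [set r | exists xi1, is_selector1 xi1 /\ r = Pre1sel xi1 v s].

Definition proper1 (T : {set S}) (pi1 : strategy) : Prop :=
  forall pi2, is_strategy2 pi2 ->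
  forall s, s \notin T :|: W2 T -> prob_reach pi1 pi2 (T :|: W2 T) s = 1.

Definition proper_selector1 (T : {set S}) (xi : selector) : Prop :=
  proper1 T (memoryless xi).

End ConcurrentGames.

(* Main.v *)
Require Import Defs.
From HB Require Import structures.
From mathcomp Require Import all_boot all_order all_algebra.
From mathcomp Require Import boolp classical_sets reals.
From mathcomp Require Import ring lra.
Import Order.TTheory GRing.Theory Num.Theory.
Local Open Scope ring_scope.

Section Aux.
Variables (R : realType) (S M : finType) (G : cgs R S M).

Lemma reach_within_bnd (pi1 pi2 : strategy R S M) X n h s :
  is_strategy1 G pi1 -> is_strategy2 G pi2 ->
  0 <= reach_within G pi1 pi2 X n h s <= 1.
Proof.
move=> H1 H2; elim: n h s => [|n IH] h s /=.
  by case: ifP => _; rewrite ?ler01 ?lexx.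
case: ifP => _; first by rewrite ler01 lexx.
have hp : forall a b t, 0 <= pi1 h s a * pi2 h s b * trans G s a b t.
  move=> a b t; case: (H1 h s) => p1 _ _; case: (H2 h s) => p2 _ _.
  by rewrite !mulr_ge0 // trans_ge0.
apply/andP; split.
  apply: sumr_ge0 => a _; apply: sumr_ge0 => b _; apply: sumr_ge0 => t _.
  by apply: mulr_ge0 => //; case/andP: (IH (rcons h s) t).
apply: (@le_trans _ _ (\sum_a \sum_b \sum_t pi1 h s a * pi2 h s b * trans G s a b t)).
  apply: ler_sum => a _; apply: ler_sum => b _; apply: ler_sum => t _.
  rewrite -[X in _ <= X]mulr1; apply: ler_wpM2l => //.
  by case/andP: (IH (rcons h s) t).
rewrite le_eqVlt; apply/orP; left; apply/eqP.
case: (H1 h s) => _ s1 _; case: (H2 h s) => _ s2 _.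
rewrite -[RHS]s1; apply: eq_bigr => a _.
transitivity (\sum_b pi1 h s a * pi2 h s b).
  apply: eq_bigr => b _; by rewrite -mulr_sumr trans_sum1 mulr1.
by rewrite -mulr_sumr s2 mulr1.
Qed.

End Aux.

Theorem lemma3 (R : realType) (S M : finType) (G : cgs R S M) (T : {set S})
    (v : S -> R) (xi1 : selector R S M) :
  (forall s, s \in T :|: W2 G T -> absorbing G s) ->
  valuation v ->
  (forall s, v s <= Pre1 G v s) ->
  (forall s, s \in W2 G T -> v s = 0) ->
  is_selector1 G xi1 ->
  (forall s, Pre1sel G xi1 v s = Pre1 G v s) ->
  proper_selector1 G T xi1 ->
  forall pi2 : strategy R S M, is_strategy2 G pi2 ->
  forall s, v s <= prob_reach G (memoryless xi1) pi2 T s.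
Proof.
move=> _ Hv Hpre HW Hxi Hsel Hprop pi2 Hpi2.
have Hxi' : is_strategy1 G (memoryless xi1) by move=> h s; exact: Hxi.
set X := T :|: W2 G T.
set rT := reach_within G (memoryless xi1) pi2 T.
set rX := reach_within G (memoryless xi1) pi2 X.
have key : forall n h s, v s <= rT n h s + (1 - rX n h s).
  elim=> [|n IH] h s.
    rewrite /rT /rX /=.
    have [sT|sT] := boolP (s \in T).
      by rewrite (_ : s \in X) ?inE ?sT // subrr addr0; case/andP: (Hv s).
    have [sW|sW] := boolP (s \in W2 G T).
      have sX : s \in X by rewrite inE sW orbT.
      by rewrite sX HW // subrr addr0.
    have sX : s \in X = false by rewrite inE (negbTE sT) (negbTE sW).
    by rewrite sX add0r subr0; case/andP: (Hv s).
  rewrite /rT /rX /=.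
  have [sT|sT] := boolP (s \in T).
    by rewrite (_ : s \in X) ?inE ?sT // subrr addr0; case/andP: (Hv s).
  have [sW|sW] := boolP (s \in W2 G T).
    have sX : s \in X by rewrite inE sW orbT.
    rewrite sX HW // subrr addr0.
    have := @reach_within_bnd R S M G _ _ T n.+1 h s Hxi' Hpi2.
    by rewrite /= (negbTE sT) => /andP[].
  have sX : s \in X = false by rewrite inE (negbTE sT) (negbTE sW).
  rewrite sX.
  rewrite /memoryless.
  set p := fun a b t => xi1 s a * pi2 h s b * trans G s a b t.
  have hp : forall a b t, 0 <= p a b t.
    move=> a b t; case: (Hxi s) => p1 _ _; case: (Hpi2 h s) => p2 _ _.
    by rewrite /p !mulr_ge0 // trans_ge0.
  have sum1 : \sum_a \sum_b \sum_t p a b t = 1.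
    case: (Hxi s) => _ s1 _; case: (Hpi2 h s) => _ s2 _.
    rewrite -[RHS]s1; apply: eq_bigr => a _.
    transitivity (\sum_b xi1 s a * pi2 h s b).
      apply: eq_bigr => b _; by rewrite /p -mulr_sumr trans_sum1 mulr1.
    by rewrite -mulr_sumr s2 mulr1.
  have -> : \sum_a \sum_b \sum_t xi1 s a * pi2 h s b * trans G s a b t *
       reach_within G (fun=> xi1) pi2 T n (rcons h s) t +
     (1 - \sum_a \sum_b \sum_t xi1 s a * pi2 h s b * trans G s a b t *
       reach_within G (fun=> xi1) pi2 X n (rcons h s) t)
     = \sum_a \sum_b \sum_t p a b t * (rT n (rcons h s) t + (1 - rX n (rcons h s) t)).
    rewrite -{1}sum1 -sumrB -big_split /=; apply: eq_bigr => a _.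
    rewrite -sumrB -big_split /=; apply: eq_bigr => b _.
    rewrite -sumrB -big_split /=; apply: eq_bigr => t _.
    rewrite /p /rT /rX /memoryless; ring.
  apply: (le_trans (Hpre s)); rewrite -Hsel.
  apply: (@le_trans _ _ (Pre12 G xi1 (pi2 h) v s)).
    apply: ge_inf; last by exists (pi2 h); split => // s'; exact: Hpi2.
    exists 0 => r [xi2 [Hxi2 ->]].
    rewrite /Pre12; apply: sumr_ge0 => a _; apply: sumr_ge0 => b _; apply: sumr_ge0 => t _.
    case: (Hxi s) => p1 _ _; case: (Hxi2 s) => p2 _ _.
    by rewrite !mulr_ge0 ?trans_ge0 //; case/andP: (Hv t).
  rewrite /Pre12; apply: ler_sum => a _; apply: ler_sum => b _; apply: ler_sum => t _.
  rewrite (_ : v t * trans G s a b t * xi1 s a * pi2 h s b = p a b t * v t); last by rewrite /p; ring.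
  by apply: ler_wpM2l => //; exact: IH.
move=> s.
have bT : forall n, 0 <= rT n [::] s <= 1 by move=> n; exact: reach_within_bnd.
have bX : forall n, 0 <= rX n [::] s <= 1 by move=> n; exact: reach_within_bnd.
have hubT : has_ubound [set r | exists n, r = rT n [::] s].
  by exists 1 => r [n ->]; case/andP: (bT n).
have geT : forall n, rT n [::] s <= prob_reach G (memoryless xi1) pi2 T s.
  by move=> n; apply: ub_le_sup => //; exists n.
have [sX|sX] := boolP (s \in X).
  case/setUP: sX => sX.
    apply: (le_trans _ (geT 0%N)); rewrite /rT /= sX; by case/andP: (Hv s).
  rewrite HW //; apply: (le_trans _ (geT 0%N)); by case/andP: (bT 0%N).
have P1 := Hprop pi2 Hpi2 s sX.
rewrite leNgt; apply/negP => Hlt.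
set P := prob_reach G (memoryless xi1) pi2 T s in Hlt geT.
have hsX : has_sup [set r | exists n, r = rX n [::] s].
  split; first by exists (rX 0%N [::] s); exists 0%N.
  by exists 1 => r [n ->]; case/andP: (bX n).
have ep : 0 < v s - P by rewrite subr_gt0.
have [e [n ->] He] := sup_adherent ep hsX.
have := key n [::] s; have := geT n.
move: He; rewrite /prob_reach in P1; rewrite -/rX in P1.
rewrite P1 => He.
lra.
Qed.
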